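(* Let $t>1$, $\eta>1$, $m\ge1$, $d>0$ and $w\in(0,1)$, and suppose $$d\le\frac{\eta\log(1/w)}{t}+\frac{2\eta\log(m+\log_\eta t)}{t}.$$ Then $$t\le\frac{2\eta}{d}\log\Big(2m+2+2\log_\eta\frac{2}{\log\eta}+2[\log_\eta(1/d)]_+\Big)+\frac{2\eta}{d}\log(1/w),$$ where $[x]_+=\max\{x,0\}$. *)

(* Defs.v *)
From Stdlib Require Import Reals.
Open Scope R_scope.

Definition logb (b x : R) : R := ln x / ln b.

Definition pos_part (x : R) : R := Rmax x 0.

(* Main.v *)
Require Import Defs.
From Stdlib Require Import Reals Lra.
Open Scope R_scope.

Lemma ln_le_sub1 (y : R) : 0 < y -> ln y <= y - 1.
Proof. intros Hy. pose proof (exp_ineq1_le (ln y)). rewrite exp_ln in H; lra. Qed.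

Lemma ln_le_mono (x y : R) : 0 < x -> x <= y -> ln x <= ln y.
Proof. intros Hx Hxy. destruct (Req_dec x y) as [->|Hn]; [lra|].
  left; apply ln_increasing; lra. Qed.

Lemma ln2_lt1 : ln 2 < 1.
Proof. rewrite <- (ln_exp 1). apply ln_increasing; [lra|].
  pose proof (exp_ineq1 1); lra. Qed.

Theorem lemma2 (t eta m d w : R) :
  1 < t -> 1 < eta -> 1 <= m -> 0 < d -> 0 < w < 1 ->
  d <= eta * ln (1 / w) / t + 2 * eta * ln (m + logb eta t) / t ->
  t <= 2 * eta / d *
         ln (2 * m + 2 + 2 * logb eta (2 / ln eta) + 2 * pos_part (logb eta (1 / d)))
       + 2 * eta / d * ln (1 / w).
Proof.
  intros Ht He Hm Hd [Hw0 Hw1] H.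
  unfold logb, pos_part in *.
  set (L := ln eta) in *.
  assert (HL : 0 < L) by (unfold L; rewrite <- ln_1; apply ln_increasing; lra).
  set (u := ln t / L) in *.
  assert (Hlt : 0 < ln t) by (rewrite <- ln_1; apply ln_increasing; lra).
  assert (Hu : 0 < u) by (unfold u; apply Rdiv_lt_0_compat; lra).
  assert (HLu : L * u = ln t) by (unfold u; field; lra).
  set (a := ln (1 / w)) in *.
  assert (Ha : 0 < a).
  { unfold a; rewrite <- ln_1; apply ln_increasing; [lra|].
    apply (Rmult_lt_reg_r w); [lra|]. unfold Rdiv; rewrite Rmult_assoc, Rinv_l; lra. }
  set (Y := ln (m + u)) in *.
  assert (HY : 0 < Y) by (unfold Y; rewrite <- ln_1; apply ln_increasing; lra).
  set (D := Rmax (ln (1 / d) / L) 0).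
  assert (HD0 : 0 <= D) by apply Rmax_r.
  assert (HLD : - ln d <= L * D).
  { assert (H0 : ln (1/d) / L <= D) by apply Rmax_l.
    assert (H1 : ln (1/d) = - ln d).
    { unfold Rdiv; rewrite Rmult_1_l; apply ln_Rinv; lra. }
    rewrite H1 in H0.
    apply (Rmult_le_compat_l L) in H0; [|lra].
    replace (L * (- ln d / L)) with (- ln d) in H0 by (field; lra). exact H0. }
  assert (Hl2 : ln (2 / L) = ln 2 - ln L).
  { unfold Rdiv; rewrite ln_mult, ln_Rinv; try lra; apply Rinv_0_lt_compat; lra. }
  assert (HlnL : ln (L/2) <= L/2 - 1) by (apply ln_le_sub1; lra).
  assert (Hl2' : ln (L/2) = ln L - ln 2).
  { unfold Rdiv; rewrite ln_mult, ln_Rinv; try lra; apply Rinv_0_lt_compat; lra. }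
  assert (HLq : L * (ln (2 / L) / L) = ln 2 - ln L) by (rewrite Hl2; field; lra).
  set (X := 2 * m + 2 + 2 * (ln (2 / L) / L) + 2 * D).
  assert (HX : 3 <= X).
  { unfold X. assert (ln (2/L)/L >= -1/2).
    { apply Rle_ge. apply (Rmult_le_reg_l L); [lra|]. rewrite HLq.
      replace (L * (-1/2)) with (- (L/2)) by field. lra. }
    lra. }
  assert (HlnX : 0 <= ln X) by (rewrite <- ln_1; apply ln_le_mono; lra).
  assert (Hh : d * t <= eta * a + 2 * eta * Y).
  { apply (Rmult_le_compat_r t) in H; [|lra].
    replace ((eta * a / t + 2 * eta * Y / t) * t) with (eta * a + 2 * eta * Y) in H
      by (field; lra). lra. }
  cut (d * t <= 2 * eta * ln X + 2 * eta * a).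
  { intros Hc. apply (Rmult_le_reg_l d); [lra|].
    replace (d * (2 * eta / d * ln X + 2 * eta / d * a)) with (2 * eta * ln X + 2 * eta * a)
      by (field; lra). lra. }
  destruct (Rle_lt_dec (4 * eta * Y) (d * t)) as [C1|C2].
  - nra.
  - assert (Hmu : m + u <= X).
    { assert (Hln : ln (d * t) < ln (4 * eta * Y)) by (apply ln_increasing; nra).
      rewrite ln_mult in Hln by lra.
      rewrite !ln_mult in Hln by nra.
      assert (ln 4 = 2 * ln 2) by (replace 4 with (2*2) by lra; rewrite ln_mult; lra).
      assert (ln Y <= Y - 1) by (apply ln_le_sub1; lra).
      assert (HYb : ln (L/2) + Y <= L/2 * (m+u) - 1).
      { unfold Y; rewrite <- ln_mult by lra. apply ln_le_sub1; nra. }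
      pose proof ln2_lt1.
      fold L in Hln.
      apply (Rmult_le_reg_l L); [lra|]. unfold X.
      replace (L * (2 * m + 2 + 2 * (ln (2 / L) / L) + 2 * D))
        with (2 * L * m + 2 * L + 2 * (L * (ln (2 / L) / L)) + 2 * (L * D)) by ring.
      rewrite HLq. nra. }
    assert (ln (m + u) <= ln X) by (apply ln_le_mono; lra).
    fold Y in H0. nra.
Qed.
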